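(* For every positive integer $n$, \[ \sum_{k=1}^{n}(8k+1)\frac{(\tfrac{1}{2})_k(\tfrac{1}{4})_k(\tfrac{3}{4})_k}{k!^3}\frac{(\tfrac{1}{2}+n)_k(-n)_k}{(\tfrac{3}{2}+3n)_k(-3n)_k}\sum_{i=1}^{k}\left\{\frac{1}{(2i-1)^2}-\frac{1}{36i^2}\right\} =\frac{1}{9}\,\frac{(\tfrac{1}{2})_n^2(\tfrac{5}{6})_n(\tfrac{7}{6})_n}{n!^2(\tfrac{1}{3})_n(\tfrac{2}{3})_n}\sum_{j=1}^{2n}\frac{(-1)^{j-1}}{j^2}. \]
   Context: For a complex number $x$ and a nonnegative integer $n$, $(x)_n=x(x+1)\cdots(x+n-1)$ denotes the shifted factorial (Pochhammer symbol), with $(x)_0=1$. *)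

(* Defs.v *)
From mathcomp Require Import all_boot all_order all_algebra.
Set Implicit Arguments. Unset Strict Implicit. Unset Printing Implicit Defensive.
Import Order.TTheory GRing.Theory Num.Theory.
Local Open Scope ring_scope.

Definition poch {R : pzRingType} (x : R) (n : nat) : R :=
  \prod_(i < n) (x + i%:R).

(* Main.v *)
Require Import Defs.
From mathcomp Require Import all_boot all_order all_algebra.
From mathcomp Require Import ring lra.
Import Order.TTheory GRing.Theory Num.Theory.
Local Open Scope ring_scope.

Lemma poch0 {R : realFieldType} (x : R) : poch x 0 = 1.
Proof. by rewrite /poch big_ord0. Qed.

Lemma pochS {R : realFieldType} (x : R) k : poch x k.+1 = poch x k * (x + k%:R).
Proof. by rewrite /poch big_ord_recr. Qed.

Lemma pochSl {R : realFieldType} (x : R) k : poch x k.+1 = x * poch (x + 1) k.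
Proof.
rewrite /poch big_ord_recl /=; congr (_ * _); first by rewrite addr0.
apply: eq_bigr => i _; rewrite /= -addrA; congr (_ + _).
by rewrite /bump /= add1n mulrS addrC.
Qed.

Lemma pochSh {R : realFieldType} (x : R) k : x != 0 -> poch (x + 1) k = poch x k * (x + k%:R) / x.
Proof.
move=> hx; have := pochSl x k; rewrite pochS => ->.
by field.
Qed.

Lemma poch_neq0 {R : realFieldType} (x : R) k : (forall i, (i < k)%N -> x + i%:R != 0) -> poch x k != 0.
Proof.
elim: k => [|k IH] H; first by rewrite poch0 oner_neq0.
rewrite pochS mulf_neq0 //; first by apply: IH => i hi; apply: H; exact: ltnW.
exact: H.
Qed.

Lemma poch_negn_zero {R : realFieldType} n m : poch (- n%:R) (n.+1 + m) = 0 :> R.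
Proof.
elim: m => [|m IH]; first by rewrite addn0 pochS addNr mulr0.
by rewrite addnS pochS IH mul0r.
Qed.

Lemma expfS_eq0 {R : realFieldType} (x : R) k : (x ^+ k.+1 == 0) = (x == 0).
Proof. by rewrite expf_eq0. Qed.

Ltac nz := rewrite ?(mulf_eq0, invr_eq0, expfS_eq0) ?negb_or;
  repeat (apply/andP; split); apply/eqP => ?; lra.

Lemma fact_neq0 {R : realFieldType} k : (k`!%:R : R) != 0.
Proof. by rewrite pnatr_eq0 -lt0n fact_gt0. Qed.

Ltac side := repeat (apply/andP; split);
  first [ assumption | exact: fact_neq0 | nz ].


Definition T {R : realFieldType} (n k : nat) : R :=
  poch (1/2) k * poch (1/4) k * poch (3/4) k / (k`!%:R ^+ 3)
  * (poch (1/2 + n%:R) k * poch (- n%:R) k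
     / (poch (3/2 + 3 * n%:R) k * poch (- (3 * n)%:R) k)).

Definition rT {R : realFieldType} (n j : nat) : R :=
  (1/2 + j%:R) * (1/4 + j%:R) * (3/4 + j%:R) * ((1/2 + n%:R + j%:R) * (- n%:R + j%:R))
  / ((j%:R + 1) ^+ 3 * ((3/2 + 3 * n%:R + j%:R) * (- (3 * n)%:R + j%:R))).

Lemma T_S {R : realFieldType} n j : T n j.+1 = T n j * rT n j :> R.
Proof.
rewrite /T /rT !pochS factS natrM.
have -> : (j.+1%:R : R) = j%:R + 1 by rewrite -natr1.
rewrite exprMn !invfM. ring.
Qed.

Definition sN {R : realFieldType} (n j : nat) : R :=
  (1/2 + n%:R + j%:R) / (1/2 + n%:R) * ((n%:R + 1) / (n%:R + 1 - j%:R))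
  * ((3/2 + 3 * n%:R) * (5/2 + 3 * n%:R) * (7/2 + 3 * n%:R)
     / ((3/2 + 3 * n%:R + j%:R) * (5/2 + 3 * n%:R + j%:R) * (7/2 + 3 * n%:R + j%:R)))
  * ((j%:R - 3 * n%:R - 3) * (j%:R - 3 * n%:R - 2) * (j%:R - 3 * n%:R - 1)
     / ((- 3 * n%:R - 3) * (- 3 * n%:R - 2) * (- 3 * n%:R - 1))).

Lemma T_Sn {R : realFieldType} n j : (j <= n)%N -> T n.+1 j = T n j * sN n j :> R.
Proof.
move=> hj.
have hN : (0 : R) <= n%:R by rewrite ler0n.
have hJ : (j%:R : R) <= n%:R by rewrite ler_nat.
have hJ0 : (0 : R) <= j%:R by rewrite ler0n.
have e1 : (1/2 + n.+1%:R : R) = (1/2 + n%:R) + 1 by rewrite -natr1; ring.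
have e2 : (3/2 + 3 * n.+1%:R : R) = ((3/2 + 3*n%:R) + 1) + 1 + 1 by rewrite -natr1; ring.
have e5 : (- n.+1%:R : R) = - (n%:R + 1) by rewrite -natr1.
have e6 : (- (3*n.+1)%:R : R) = - (3 * n%:R + 3) by rewrite natrM -natr1; congr (- _); ring.
have e3 : (- n%:R : R) = - (n%:R + 1) + 1 by ring.
have e4 : (- (3*n)%:R : R) = - (3 * n%:R + 3) + 1 + 1 + 1 by rewrite natrM; ring.
rewrite /T e1 e2 e5 e6 e3 e4 !pochSh; clear e1 e2 e3 e4 e5 e6; [|nz..].
have hc : poch (3 / 2 + 3 * n%:R : R) j != 0.
  apply: poch_neq0 => i _; have : (0:R) <= i%:R by rewrite ler0n. move=> ?; nz.
have hd : poch (- (3 * n%:R + 3) : R) j != 0.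
  apply: poch_neq0 => i hi; have : (i%:R : R) + 1 <= n%:R by rewrite natr1 ler_nat (leq_trans hi hj).
  move=> ?; nz.
move: hc hd.
set a := poch (1 / 2 + n%:R) j.
set b := poch (- (n%:R + 1)) j.
set c := poch (3 / 2 + 3 * n%:R) j.
set d := poch (- (3 * n%:R + 3)) j.
move=> hc hd.
rewrite /sN. field; side.
Qed.


Definition Kc {R : realFieldType} (n : nat) : R :=
  (6 * n%:R + 5) * (6 * n%:R + 7) * (4 * n%:R + 3)
  / ((n%:R + 1) ^+ 2 * (3 * n%:R + 1) * (3 * n%:R + 2)).

Definition gg {R : realFieldType} (n k : nat) : R :=
  - 2 * Kc n * (2 * k%:R - 1) * (k%:R - 1/2) * (k%:R - 3/4) * (k%:R - 1/4) * (k%:R - 1/2 + n%:R)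
  / ((k%:R + 1/2 + 3 * n%:R) * (2 * k%:R + 6 * n%:R + 3) * (2 * k%:R + 6 * n%:R + 5)).

Definition cc {R : realFieldType} (n : nat) : R :=
  (n%:R + 1/2) ^+ 2 * (n%:R + 5/6) * (n%:R + 7/6)
  / ((n%:R + 1) ^+ 2 * (n%:R + 1/3) * (n%:R + 2/3)).

Lemma natS1 {R : realFieldType} k : (k.+1%:R : R) = k%:R + 1.
Proof. by rewrite -natr1. Qed.
Lemma natS2 {R : realFieldType} k : (k.+2%:R : R) = k%:R + 2.
Proof. rewrite -natr1 natS1; ring. Qed.

Lemma Zpt {R : realFieldType} n j : (1 <= n)%N -> (j <= n)%N ->
  (8 * j.+1%:R + 1) * T n.+1 j.+1 - cc n * ((8 * j.+1%:R + 1) * T n j.+1)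
  = gg n j.+2 * T n j.+1 - gg n j.+1 * T n j :> R.
Proof.
move=> hn hj.
have hN : (1 : R) <= n%:R by rewrite ler1n.
have hJ : (j%:R : R) <= n%:R by rewrite ler_nat.
have hJ0 : (0 : R) <= j%:R by rewrite ler0n.
rewrite !T_S T_Sn //.
rewrite /sN /rT /gg /cc /Kc !natrM ?(natS1 n) ?(natS1 j.+1) ?(natS1 j).
move: (T n j) => t.
field; side.
Qed.

Lemma T0 {R : realFieldType} n : T n 0 = 1 :> R.
Proof. by rewrite /T !poch0 fact0; field. Qed.

Lemma Zpt0 {R : realFieldType} n : 
  (8 * 0%:R + 1) * T n.+1 0 - cc n * ((8 * 0%:R + 1) * T n 0) = gg n 1 * T n 0 - 0 :> R.
Proof.
have hN : (0 : R) <= n%:R by rewrite ler0n.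
rewrite !T0 /gg /cc /Kc subr0 mulr0n.
field; side.
Qed.

Definition hh {R : realFieldType} (k : nat) : R :=
  1 / ((2 * k%:R - 1) ^+ 2) - 1 / (36 * k%:R ^+ 2).

Definition Cc {R : realFieldType} (n : nat) : R :=
  - 2 * (n%:R + 1) ^+ 2 * (6 * n%:R + 11) * (6 * n%:R + 13) * (4 * n%:R + 5) * (4 * n%:R + 7)
  / ((n%:R + 2) ^+ 4 * (3 * n%:R + 4) * (3 * n%:R + 5) * (4 * n%:R + 3)).

Definition vv {R : realFieldType} (n k : nat) : R :=
  Cc n * (k%:R + 1) ^+ 2 * (2 * k%:R - 1) * (k%:R - 1/2) * (k%:R - 3/4) * (k%:R - 1/4) * (k%:R - 1/2 + n%:R)
  / ((8 * k%:R + 7) * (2 * k%:R + 6 * n%:R + 9) * (2 * k%:R + 6 * n%:R + 11) * k%:R ^+ 2 * (k%:R + 1/2 + 3 * n%:R))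
  * gg n k.+1 * hh k.+1.

Definition qq {R : realFieldType} (n : nat) : R := 1 / ((2 * n%:R + 1) ^+ 2) - 1 / ((2 * n%:R + 2) ^+ 2).

Definition rho {R : realFieldType} (n : nat) : R := cc n.+1 * qq n.+1 / qq n.

Definition Bw {R : realFieldType} (n j : nat) : R :=
  (1/2 + j%:R) * (1/4 + j%:R) * (3/4 + j%:R) * (1/2 + n%:R + j%:R)
  / ((j%:R + 1) ^+ 3 * (3/2 + 3 * n%:R + j%:R) * (- (3 * n%:R) + j%:R))
  * ((n%:R + 1) ^+ 2 * (4 * n%:R + 7) * (6 * n%:R + 11) * (6 * n%:R + 13)
     / ((n%:R + 2) ^+ 4 * (4 * n%:R + 3) * (3 * n%:R + 4) * (3 * n%:R + 5)
        * (2 * j%:R + 6 * n%:R + 11) * (2 * j%:R + 6 * n%:R + 13) * (8 * j%:R + 15)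
        * (2 * j%:R + 6 * n%:R + 15))).

Definition e1 {R : realFieldType} (n j : nat) : R :=
  (j%:R - 3 * n%:R - 2) * (j%:R - 3 * n%:R - 1) * (j%:R - 3 * n%:R) * (n%:R + 2) ^+ 2
  * (2 * j%:R + 2 * n%:R + 5) * (8 * j%:R + 15).
Definition e2 {R : realFieldType} (n j : nat) : R :=
  - (1/16) * (j%:R - n%:R) * (2 * n%:R + 1) ^+ 2 * (2 * j%:R + 6 * n%:R + 11)
  * (2 * j%:R + 6 * n%:R + 13) * (8 * j%:R + 15) * (2 * j%:R + 6 * n%:R + 15).
Definition e3 {R : realFieldType} (n j : nat) : R :=
  (1/16) * (j%:R - n%:R) * (2 * j%:R + 3) ^+ 2 * (2 * j%:R + 2 * n%:R + 5) * (4 * n%:R + 5)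
  * (4 * j%:R + 11) * (4 * j%:R + 13).
Definition e4 {R : realFieldType} (n j : nat) : R :=
  - 2 * (j%:R - 3 * n%:R) * (j%:R + 1) * (2 * j%:R + 1) * (j%:R + 2) ^+ 2 * (4 * n%:R + 5)
  * (2 * j%:R + 6 * n%:R + 15).

Lemma esum {R : realFieldType} n j : e4 n j = - (e1 n j + e2 n j + e3 n j) :> R.
Proof. by rewrite /e1 /e2 /e3 /e4; field. Qed.

Lemma WL1 {R : realFieldType} n j (t : R) : (1 <= n)%N -> (j <= n)%N ->
  gg n.+1 j.+2 * (t * sN n j * rT n.+1 j) * hh j.+2
  = gg n j.+2 * hh j.+2 * t * Bw n j * e1 n j.
Proof.
move=> hn hj.
have hN : (1 : R) <= n%:R by rewrite ler1n.
have hJ : (j%:R : R) <= n%:R by rewrite ler_nat.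
have hJ0 : (0 : R) <= j%:R by rewrite ler0n.
move: (hh j.+2) => hv.
rewrite /gg /sN /rT /Bw /e1 /Kc ?natrM ?(natS1 n) ?(natS1 j.+1) ?(natS1 j).
field; side.
Qed.

Lemma WL2 {R : realFieldType} n j (t : R) : (1 <= n)%N -> (j <= n)%N ->
  rho n * (gg n j.+2 * (t * rT n j) * hh j.+2)
  = - (gg n j.+2 * hh j.+2 * t * Bw n j * e2 n j).
Proof.
move=> hn hj.
have hN : (1 : R) <= n%:R by rewrite ler1n.
have hJ : (j%:R : R) <= n%:R by rewrite ler_nat.
have hJ0 : (0 : R) <= j%:R by rewrite ler0n.
move: (hh j.+2) (gg n j.+2) => hv gv.
rewrite /rho /cc /qq /rT /Bw /e2 ?natrM ?(natS1 n) ?(natS1 j.+1) ?(natS1 j).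
field; side.
Qed.

Lemma GH3 {R : realFieldType} n j :
  gg n j.+3 * hh j.+3 = gg n j.+2 * hh j.+2 *
   ((j%:R + 2) ^+ 2 * (2 * j%:R + 2 * n%:R + 5) * (2 * j%:R + 6 * n%:R + 5) * (4 * j%:R + 11)
    * (4 * j%:R + 13) * (8 * j%:R + 23)
    / ((j%:R + 3) ^+ 2 * (2 * j%:R + 2 * n%:R + 3) * (4 * j%:R + 5) * (4 * j%:R + 7)
       * (2 * j%:R + 6 * n%:R + 11) * (8 * j%:R + 15))) :> R.
Proof.
have hN : (0 : R) <= n%:R by rewrite ler0n.
have hJ0 : (0 : R) <= j%:R by rewrite ler0n.
rewrite /gg /hh.
move: (Kc n) => kv.
rewrite ?(natS1 j.+2) ?(natS1 j.+1) ?(natS1 j).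
field; side.
Qed.

Lemma WR1 {R : realFieldType} n j (t : R) : (1 <= n)%N -> (j <= n)%N ->
  vv n j.+2 * (t * rT n j) = - (gg n j.+2 * hh j.+2 * t * Bw n j * e3 n j).
Proof.
move=> hn hj.
have hN : (1 : R) <= n%:R by rewrite ler1n.
have hJ : (j%:R : R) <= n%:R by rewrite ler_nat.
have hJ0 : (0 : R) <= j%:R by rewrite ler0n.
rewrite /vv -(mulrA _ (gg n j.+3)) GH3.
move: (hh j.+2) (gg n j.+2) => hv gv.
rewrite /Cc /rT /Bw /e3 ?natrM ?(natS1 n) ?(natS1 j.+2) ?(natS1 j.+1) ?(natS1 j).
field; side.
Qed.

Lemma WR2 {R : realFieldType} n j (t : R) : (1 <= n)%N -> (j <= n)%N ->
  vv n j.+1 * t = gg n j.+2 * hh j.+2 * t * Bw n j * e4 n j.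
Proof.
move=> hn hj.
have hN : (1 : R) <= n%:R by rewrite ler1n.
have hJ : (j%:R : R) <= n%:R by rewrite ler_nat.
have hJ0 : (0 : R) <= j%:R by rewrite ler0n.
rewrite /vv.
move: (hh j.+2) (gg n j.+2) => hv gv.
rewrite /Cc /Bw /e4 ?natrM ?(natS1 n) ?(natS1 j).
field; side.
Qed.

Lemma Wpt {R : realFieldType} n j : (1 <= n)%N -> (j <= n)%N ->
  gg n.+1 j.+2 * T n.+1 j.+1 * hh j.+2 - rho n * (gg n j.+2 * T n j.+1 * hh j.+2)
  = vv n j.+2 * T n j.+1 - vv n j.+1 * T n j :> R.
Proof.
move=> hn hj.
rewrite !T_S T_Sn // WL1 // WL2 // WR1 // WR2 // esum.
ring.
Qed.

Lemma Wpt0 {R : realFieldType} n : (1 <= n)%N ->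
  gg n.+1 1 * T n.+1 0 * hh 1 - rho n * (gg n 1 * T n 0 * hh 1) = vv n 1 * T n 0 - 0 :> R.
Proof.
move=> hn.
have hN : (1 : R) <= n%:R by rewrite ler1n.
rewrite !T0 subr0 /vv /rho /gg /cc /Kc /hh /Cc /qq (natS1 n) ?(natS1 1) ?(natS1 0) ?mulr0n.
field; side.
Qed.


Lemma Tz {R : realFieldType} n k : (n < k)%N -> T n k = 0 :> R.
Proof.
move=> h; rewrite -(subnKC h) /T poch_negn_zero.
by rewrite mulr0 mul0r mulr0.
Qed.

Lemma tele {R : realFieldType} (f : nat -> R) m :
  \sum_(k < m) (f k.+1 - f k) = f m - f 0.
Proof.
elim: m => [|m IH]; first by rewrite big_ord0 subrr.
by rewrite big_ord_recr /= IH; ring.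
Qed.

Definition FF {R : realFieldType} n k : R := (8 * k%:R + 1) * T n k.
Definition HH {R : realFieldType} k : R := \sum_(1 <= i < k.+1) hh i.
Definition GG {R : realFieldType} n k : R := if k is k'.+1 then gg n k * T n k' else 0.
Definition WW {R : realFieldType} n : R := \sum_(k < n.+2) gg n k.+1 * T n k * hh k.+1.

Lemma HH0 {R : realFieldType} : HH 0 = 0 :> R.
Proof. by rewrite /HH big_geq. Qed.

Lemma HHS {R : realFieldType} k : HH k.+1 = HH k + hh k.+1 :> R.
Proof. by rewrite /HH big_nat_recr. Qed.

Lemma Zsum {R : realFieldType} n : (1 <= n)%N ->
  \sum_(k < n.+2) FF n.+1 k * HH k = cc n * \sum_(k < n.+1) FF n k * HH k - WW n :> R.
Proof.
move=> hn.
have -> : \sum_(k < n.+1) FF n k * HH k = \sum_(k < n.+2) FF n k * HH k :> R.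
  by rewrite [in RHS]big_ord_recr /= /FF Tz // mulr0 mul0r addr0.
suff key : \sum_(k < n.+2) (FF n.+1 k * HH k - cc n * (FF n k * HH k)) = - WW n :> R.
  by move: key; rewrite sumrB -mulr_sumr => key; lra.
have -> : \sum_(k < n.+2) (FF n.+1 k * HH k - cc n * (FF n k * HH k))
   = \sum_(k < n.+2) ((GG n k.+1 * HH k.+1 - GG n k * HH k) - gg n k.+1 * T n k * hh k.+1) :> R.
  apply: eq_bigr => [[k hk]] _ /=.
  have e : FF n.+1 k * HH k - cc n * (FF n k * HH k) = (GG n k.+1 - GG n k) * HH k :> R.
    case: k hk => [|j] hj.
      by rewrite /FF mulrA -mulrBl Zpt0 /=.
    by rewrite /FF mulrA -mulrBl (Zpt n j hn hj) /=.
  by rewrite e HHS /=; ring.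
rewrite sumrB (tele (fun k => GG n k * HH k)) /= /WW.
rewrite Tz // mulr0 mul0r.
rewrite /GG; ring.
Qed.

Definition Om {R : realFieldType} n : R :=
  poch (1/2) n ^+ 2 * poch (5/6) n * poch (7/6) n
  / (n`!%:R ^+ 2 * poch (1/3) n * poch (2/3) n).

Lemma Om_S {R : realFieldType} n : Om n.+1 = Om n * cc n :> R.
Proof.
rewrite /Om /cc !pochS factS natrM.
have -> : (n.+1%:R : R) = n%:R + 1 by rewrite -natr1.
rewrite !(addrC n%:R) !exprMn !invfM. ring.
Qed.

Lemma Om0 {R : realFieldType} : Om 0 = 1 :> R.
Proof. by rewrite /Om !poch0 fact0; field. Qed.

Definition EE {R : realFieldType} n : R :=
  \sum_(1 <= j < (2 * n).+1) ((-1) ^+ j.-1 / (j%:R ^+ 2)).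

Lemma EE_S {R : realFieldType} n : EE n.+1 = EE n + qq n :> R.
Proof.
rewrite /EE mulnS !add2n big_nat_recr // big_nat_recr //= /qq.
rewrite (exprS (-1 : R)) (mulnC 2 n) exprM sqrr_sign (natS1 (n * 2).+1) (natS1 (n * 2)) natrM.
have hN : (0 : R) <= n%:R by rewrite ler0n.
field; side.
Qed.

Definition VV {R : realFieldType} n k : R := if k is k'.+1 then vv n k * T n k' else 0.

Lemma WW_S {R : realFieldType} n : (1 <= n)%N -> WW n.+1 = rho n * WW n :> R.
Proof.
move=> hn.
have -> : WW n = \sum_(k < n.+3) gg n k.+1 * T n k * hh k.+1 :> R.
  by rewrite /WW [in RHS]big_ord_recr /= Tz // mulr0 mul0r addr0.
suff key : \sum_(k < n.+3) (gg n.+1 k.+1 * T n.+1 k * hh k.+1 - rho n * (gg n k.+1 * T n k * hh k.+1)) = 0 :> R.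
  by move: key; rewrite sumrB -mulr_sumr /WW => key; lra.
have -> : \sum_(k < n.+3) (gg n.+1 k.+1 * T n.+1 k * hh k.+1 - rho n * (gg n k.+1 * T n k * hh k.+1))
   = \sum_(k < n.+3) (VV n k.+1 - VV n k) :> R.
  apply: eq_bigr => [[k hk]] _ /=.
  case: k hk => [|j] hj; first by rewrite Wpt0.
  have [hjn|hjn] := leqP j n; first by rewrite (Wpt n j hn hjn).
  have ej : j = n.+1 by apply/eqP; rewrite eqn_leq hjn andbT -ltnS.
  rewrite ej /= !Tz //; ring.
rewrite (tele (VV n)) /= Tz //; ring.
Qed.

Lemma qq_neq0 {R : realFieldType} n : qq n != 0 :> R.
Proof.
have hN : (0 : R) <= n%:R by rewrite ler0n.
have -> : qq n = (4 * n%:R + 3) / ((2 * n%:R + 1) ^+ 2 * (2 * n%:R + 2) ^+ 2) :> R.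
  by rewrite /qq; field; side.
nz.
Qed.

Lemma WW1 {R : realFieldType} : WW 1 = - Om 2 / 9 * qq 1 :> R.
Proof.
rewrite /WW !big_ord_recr big_ord0 /= (Tz 1 2) // T_S T0 Om_S Om_S Om0.
rewrite /gg /rT /hh /cc /Kc /qq.
by field.
Qed.

Lemma WW_val {R : realFieldType} n : (1 <= n)%N -> WW n = - Om n.+1 / 9 * qq n :> R.
Proof.
case: n => // m _; elim: m => [|m IH]; first exact: WW1.
rewrite WW_S // IH /rho (Om_S m.+2).
have hq := @qq_neq0 R m.+1.
field.
by rewrite hq.
Qed.

Lemma EE0 {R : realFieldType} : EE 0 = 0 :> R.
Proof. by rewrite /EE big_geq. Qed.

Lemma mainP {R : realFieldType} n : (1 <= n)%N ->
  \sum_(k < n.+1) FF n k * HH k = 1/9 * Om n * EE n :> R.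
Proof.
case: n => // m _; elim: m => [|m IH].
  rewrite !big_ord_recr big_ord0 /= HH0 HHS HH0 EE_S EE0 Om_S Om0 /FF T_S T0.
  rewrite /rT /hh /cc /qq.
  by field.
rewrite Zsum // IH WW_val // (Om_S m.+1) (EE_S m.+1).
ring.
Qed.


Lemma mainGen {R : realFieldType} (n : nat) : (0 < n)%N ->
  \sum_(1 <= k < n.+1)
     (8 * k%:R + 1 : R)
     * (poch (1/2) k * poch (1/4) k * poch (3/4) k / (k`!%:R ^+ 3))
     * (poch (1/2 + n%:R) k * poch (- n%:R) k
        / (poch (3/2 + 3 * n%:R) k * poch (- (3 * n)%:R) k))
     * \sum_(1 <= i < k.+1)
         (1 / ((2 * i%:R - 1) ^+ 2) - 1 / (36 * i%:R ^+ 2))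
  = 1/9 * (poch (1/2 : R) n ^+ 2 * poch (5/6) n * poch (7/6) n
           / (n`!%:R ^+ 2 * poch (1/3) n * poch (2/3) n))
    * \sum_(1 <= j < (2 * n).+1) ((-1) ^+ j.-1 / (j%:R ^+ 2)).
Proof.
move=> hn.
have := @mainP R n hn.
rewrite /Om /EE => <-.
rewrite big_ord_recl /= HH0 mulr0 add0r.
rewrite big_add1 big_mkord.
apply: eq_bigr => i _.
by rewrite /FF /T /HH /hh /bump /= add1n !mulrA.
Qed.

Theorem mainTheorem8 (n : nat) : (0 < n)%N ->
  \sum_(1 <= k < n.+1)
     (8 * k%:R + 1 : rat)
     * (poch (1/2) k * poch (1/4) k * poch (3/4) k / (k`!%:R ^+ 3))
     * (poch (1/2 + n%:R) k * poch (- n%:R) k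
        / (poch (3/2 + 3 * n%:R) k * poch (- (3 * n)%:R) k))
     * \sum_(1 <= i < k.+1)
         (1 / ((2 * i%:R - 1) ^+ 2) - 1 / (36 * i%:R ^+ 2))
  = 1/9 * (poch (1/2 : rat) n ^+ 2 * poch (5/6) n * poch (7/6) n
           / (n`!%:R ^+ 2 * poch (1/3) n * poch (2/3) n))
    * \sum_(1 <= j < (2 * n).+1) ((-1) ^+ j.-1 / (j%:R ^+ 2)).
Proof.
exact: (@mainGen rat n).
Qed.
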